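(* Let $\{K_i\}_{i\in I}$ be a family of fields, let $V_i$ be a vector space over $K_i$ for each $i\in I$, and let $R=\prod_{i\in I}\mathrm{End}_{K_i}(V_i)$. Then for every $a\in R$ there exists an idempotent $e\in aRa$ such that $(a(1-e))^2=0$.
   Context: Elements of $\mathrm{End}_{K_i}(V_i)$ act on the left of $V_i$; $R$ is the direct product ring with coordinatewise operations. *)

(* Defs.v *)
From HB Require Import structures.
From mathcomp Require Import all_boot all_order all_algebra.
Set Implicit Arguments. Unset Strict Implicit. Unset Printing Implicit Defensive.
Import GRing.Theory.
Local Open Scope ring_scope.

(* An element of R is a family
   x = (x_i)_i of K_i-linear maps x_i : V_i -> V_i; we represent it by the
   underlying family of functions together with the predicate [inR x]
   stating that every component is K_i-linear. *)

Definition famEnd (I : Type) (K : I -> fieldType) (V : forall i, lmodType (K i)) :=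
  forall i : I, V i -> V i.

Definition inR (I : Type) (K : I -> fieldType) (V : forall i, lmodType (K i))
  (x : famEnd V) : Prop := forall i, linear (x i).

Definition mulR (I : Type) (K : I -> fieldType) (V : forall i, lmodType (K i))
  (x y : famEnd V) : famEnd V := fun i => x i \o y i.

Definition oneR (I : Type) (K : I -> fieldType) (V : forall i, lmodType (K i))
  : famEnd V := fun i => id.

Definition zeroR (I : Type) (K : I -> fieldType) (V : forall i, lmodType (K i))
  : famEnd V := fun i _ => 0.

Definition subR (I : Type) (K : I -> fieldType) (V : forall i, lmodType (K i))
  (x y : famEnd V) : famEnd V := fun i v => x i v - y i v.

Arguments oneR {I K} V.
Arguments zeroR {I K} V.

(* Main.v *)
Require Import Defs.
From HB Require Import structures.
From mathcomp Require Import all_boot all_order all_algebra.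
From mathcomp Require Import boolp classical_sets.
Set Implicit Arguments. Unset Strict Implicit. Unset Printing Implicit Defensive.
Import GRing.Theory.
Local Open Scope ring_scope.

Section Lin.
Variables (K : fieldType) (V : lmodType K).
Implicit Types (f g : V -> V).

Lemma linB f : linear f -> forall x y, f (x - y) = f x - f y.
Proof. by move=> /zmod_morphism_linear. Qed.
Lemma lin0 f : linear f -> f 0 = 0.
Proof. by move=> lf; have := linB lf 0 0; rewrite subrr => ->; rewrite subrr. Qed.
Lemma linD f : linear f -> forall x y, f (x + y) = f x + f y.
Proof. by move=> lf x y; have := lf 1 x y; rewrite !scale1r. Qed.
Lemma linZ f : linear f -> forall k x, f (k *: x) = k *: f x.
Proof. by move=> lf k x; have := lf k x 0; rewrite !addr0 lin0 // addr0. Qed.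

Definition subsp (S : V -> Prop) := S 0 /\ forall k x y, S x -> S y -> S (k *: x + y).

Lemma subspD S : subsp S -> forall x y, S x -> S y -> S (x + y).
Proof. by case=> _ H x y Sx Sy; have := H 1 x y Sx Sy; rewrite scale1r. Qed.
Lemma subspZ S : subsp S -> forall k x, S x -> S (k *: x).
Proof. by case=> S0 H k x Sx; have := H k x 0 Sx S0; rewrite addr0. Qed.
Lemma subspN S : subsp S -> forall x, S x -> S (- x).
Proof. by move=> sS x Sx; rewrite -scaleN1r; apply: subspZ. Qed.
Lemma subspB S : subsp S -> forall x y, S x -> S y -> S (x - y).
Proof. by move=> sS x y Sx Sy; apply: subspD => //; apply: subspN. Qed.

Lemma proj W Z : subsp W -> subsp Z -> (forall x, W x -> Z x -> x = 0) ->
  exists p, linear p /\ (forall x, W (p x)) /\ (forall w, W w -> p w = w)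
            /\ (forall z, Z z -> p z = 0).
Proof.
move=> sW sZ WZ.
pose P (Q : set V) := (forall k x y, Q x -> Q y -> Q (k *: x + y)) /\
  (forall x, Q x -> W x -> x = 0) /\ ((exists x, Q x) -> forall z, Z z -> Q z).
have [A [[Alin [AW AZ]] Amax]] : exists A, P A /\ forall B, (A `<` B)%classic -> ~ P B.
  apply: Zorn_bigcup => F FP Ftot; split; [|split].
  - move=> k x y [X FX Xx] [Y FY Yy]; case: (Ftot X Y FX FY) => XY.
      by exists Y => //; apply: (FP Y FY).1 => //; exact: XY.
    by exists X => //; apply: (FP X FX).1 => //; exact: XY.
  - by move=> x [X FX Xx] Wx; exact: (FP X FX).2.1 x Xx Wx.
  - move=> [x [X FX Xx]] z Zz; exists X => //; apply: (FP X FX).2.2 => //.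
    by exists x.
have AZ' : forall z, Z z -> A z.
  case: (pselect (exists x, A x)) => [ne|emp]; first exact: AZ.
  exfalso; apply: (Amax Z); first split.
  - by move=> t At; exfalso; apply: emp; exists t.
  - by move=> sub; apply: emp; exists 0; apply: sub; exact: sZ.1.
  split; first exact: sZ.2.
  by split=> // x Zx Wx; exact: WZ.
have A0 : A 0 := AZ' 0 sZ.1.
have sA : subsp A by [].
have dec : forall v, exists w, W w /\ A (v - w).
  move=> v; case: (pselect (exists w, W w /\ A (v - w))) => // H; exfalso.
  pose B := fun u => exists q k, A q /\ u = q + k *: v.
  apply: (Amax B); first split.
  - by move=> u Au; exists u, 0; rewrite scale0r addr0.
  - move=> BA; apply: H; exists 0; split; first exact: sW.1.
    rewrite subr0; apply: BA; exists 0, 1; by rewrite scale1r add0r.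
  split; [|split].
  - move=> k _ _ [q1 [k1 [Aq1 ->]]] [q2 [k2 [Aq2 ->]]].
    exists (k *: q1 + q2), (k * k1 + k2); split; first exact: Alin.
    by rewrite scalerDr scalerA addrACA -scalerDl.
  - move=> _ [q [k [Aq ->]]] Wu.
    have [k0|kn0] := eqVneq k 0.
      by move: Wu; rewrite k0 scale0r addr0; exact: AW.
    exfalso; apply: H; exists (k^-1 *: (q + k *: v)); split.
      exact: subspZ.
    have -> : v - k^-1 *: (q + k *: v) = - (k^-1 *: q).
      by rewrite scalerDr scalerA mulVf // scale1r opprD addrCA subrr addr0.
    by apply: subspN => //; apply: subspZ.
  - by move=> _ z Zz; exists z, 0; rewrite scale0r addr0; split=> //; exact: AZ'.
have uniq : forall v w1 w2, W w1 -> A (v - w1) -> W w2 -> A (v - w2) -> w1 = w2.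
  move=> v w1 w2 W1 A1 W2 A2; apply/eqP; rewrite -subr_eq0; apply/eqP.
  apply: AW; last exact: subspB.
  have -> : w1 - w2 = (v - w2) - (v - w1).
    by rewrite opprB [RHS]addrC addrA subrK.
  exact: subspB.
pose p v := projT1 (cid (dec v)).
have pP : forall v, W (p v) /\ A (v - p v) by move=> v; exact: (projT2 (cid (dec v))).
exists p; split; [|split; [|split]].
- move=> k x y; symmetry; apply: (uniq (k *: x + y)).
  + by apply: (sW.2); apply pP.
  + have -> : k *: x + y - (k *: p x + p y) = k *: (x - p x) + (y - p y).
      by rewrite scalerBr opprD addrACA.
    by apply: Alin; apply pP.
  + by apply pP.
  + by apply pP.
- by move=> x; apply pP.
- move=> w Ww; symmetry; apply: (uniq w) => //; first by rewrite subrr.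
  + by apply pP.
  + by apply pP.
- move=> z Zz; symmetry; apply: (uniq z); first exact: sW.1.
  + by rewrite subr0; exact: AZ'.
  + by apply pP.
  + by apply pP.
Qed.

Lemma subspI S1 S2 : subsp S1 -> subsp S2 -> subsp (fun x => S1 x /\ S2 x).
Proof.
move=> [h1 H1] [h2 H2]; split => // k x y [] ? ? [] ? ?; split; [exact: H1|exact: H2].
Qed.

Lemma subspK f : linear f -> subsp (fun x => f x = 0).
Proof. by move=> lf; split; [exact: lin0|move=> k x y fx fy; rewrite lf fx fy scaler0 addr0]. Qed.

Lemma subspIm f : linear f -> subsp (fun y => exists x, f x = y).
Proof.
move=> lf; split; first by exists 0; exact: lin0.
by move=> k _ _ [x1 <-] [x2 <-]; exists (k *: x1 + x2); rewrite lf.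
Qed.

Lemma subsp0 : subsp (fun x : V => x = 0).
Proof. by split => // k x y -> ->; rewrite scaler0 addr0. Qed.

Lemma main (a : V -> V) : linear a -> exists r : V -> V, linear r /\
  (forall x, a (r (a (a (r (a x))))) = a (r (a x))) /\
  (forall x, a (a x - a (r (a (a x)))) = 0).
Proof.
move=> la.
have sK := subspK la; have sI := subspIm la.
have [p0 [lp0 [p0K [p0id _]]]] := proj sK subsp0 (fun x _ (h : x = 0) => h).
have [p3 [lp3 [p3I [p3id _]]]] := proj sI subsp0 (fun x _ (h : x = 0) => h).
pose pre v := projT1 (cid (p3I v)).
have prP : forall v, a (pre v) = p3 v by move=> v; exact: projT2 (cid (p3I v)).
have key : forall x x', a x = a x' -> x - p0 x = x' - p0 x'.
  move=> x x' axx; apply/eqP; rewrite -subr_eq0; apply/eqP.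
  have K0 : a (x - x') = 0 by rewrite linB // axx subrr.
  have := p0id _ K0; rewrite linB // => e0.
  by rewrite !opprD addrACA -opprD e0 subrr.
pose h v := pre v - p0 (pre v).
have lh : linear h.
  move=> k u v; rewrite /h.
  rewrite (key (pre (k *: u + v)) (k *: pre u + pre v)); last first.
    by rewrite prP lp3 la !prP.
  by rewrite lp0 scalerBr opprD addrACA.
have aha : forall x, a (h (a x)) = a x.
  move=> x; rewrite /h (key (pre (a x)) x); last by rewrite prP p3id //; exists x.
  by rewrite linB // p0K subr0.
have sN := subspI sK sI.
have [pN [lpN [pNN [pNid _]]]] := proj sN subsp0 (fun x _ (h : x = 0) => h).
pose T := fun y => (exists x, a x = y) /\ pN y = 0.
have sT : subsp T by apply: subspI => //; exact: subspK.
have TK : forall x, T x -> a x = 0 -> x = 0.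
  move=> x [Ix px] ax; by rewrite -(pNid x) //.
have [e [le [eT [eid eK]]]] := proj sT sK TK.
exists (fun v => h (e (h v))); split.
  by move=> k x y; rewrite lh le lh.
have ara : forall x, a (h (e (h (a x)))) = e x.
  move=> x.
  have -> : e (h (a x)) = e x.
    have K0 : a (x - h (a x)) = 0 by rewrite linB // aha subrr.
    transitivity (e (h (a x) + (x - h (a x)))); first by rewrite linD // (eK _ K0) addr0.
    by rewrite addrC subrK.
  by have [[y <-] _] := eT x; rewrite aha.
split.
  by move=> x; rewrite !ara eid.
move=> x; rewrite ara.
set y := a x.
have [KN IN] := pNN y.
have Ty : T (y - pN y).
  split; first by apply: (subspB sI) => //; exists x.
  by rewrite linB // (pNid (pN y)) ?subrr.
have -> : e y = y - pN y.
  transitivity (e (pN y + (y - pN y))); last by rewrite (linD le) (eK _ KN) add0r eid.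
  by rewrite addrC subrK.
by rewrite opprB addrC subrK.
Qed.
End Lin.

Theorem corollary2p10 (I : Type) (K : I -> fieldType)
  (V : forall i, lmodType (K i)) (a : famEnd V) (ha : inR a) :
  exists e : famEnd V,
    (exists r : famEnd V, inR r /\ e = mulR a (mulR r a)) /\
    mulR e e = e /\
    mulR (mulR a (subR (oneR V) e)) (mulR a (subR (oneR V) e)) = zeroR V.
Proof.
have H := fun i => main (ha i).
pose r : famEnd V := fun i => projT1 (cid (H i)).
have rP : forall i, _ := fun i => projT2 (cid (H i)).
exists (mulR a (mulR r a)); split.
  by exists r; split => // i; exact: (rP i).1.
split; apply: functional_extensionality_dep => i; apply: funext => x;
  rewrite /mulR /subR /oneR /zeroR /=.
  exact: (rP i).2.1.
exact: (rP i).2.2.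
Qed.
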